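(* Let $\mathbf{IL}\mathsf X$ be a Horn logic and $A$ a formula. If a systematic $\mathbf{IL}\mathsf X$-tableau for $\{\neg A\}$ closes, then $A$ is $\mathbf{IL}\mathsf X$-valid, i.e. $M,x\Vdash A$ for every $\mathbf{IL}\mathsf X$-model $M$ and every world $x$ of $M$.
   Context: Formulas: built from a countable set $\mathsf{Prop}$ of propositional variables by $\neg$, $\to$, unary $\Box$ and binary $\rhd$. $\mathbf{IL}$ is the modal logic with axioms all instances of propositional tautologies and the schemes $\Box(A\to B)\to(\Box A\to\Box B)$, $\Box(\Box A\to A)\to\Box A$, $\Box(A\to B)\to A\rhd B$, $(A\rhd B)\wedge(B\rhd C)\to A\rhd C$, $(A\rhd C)\wedge(B\rhd C)\to A\vee B\rhd C$, $A\rhd B\to(\Diamond A\to\Diamond B)$, $\Diamond A\rhd A$ ($\Diamond=\neg\Box\neg$), rules modus ponens and necessitation. An $\mathbf{IL}$-frame is $\langle W,R,S\rangle$ with $W\neq\emptyset$, $R$ transitive and Noetherian (no infinite chains $x_0Rx_1Rx_2\cdots$), $S$ ternary, $yS_xz$ meaning $(x,y,z)\in S$, each $S_x$ a reflexive transitive relation on $\{y:xRy\}$, and $xRyRz\Rightarrow yS_xz$. A model adds a valuation $V$; forcing standard for $\neg,\to$; $x\Vdash\Box A$ iff all $R$-successors force $A$; $x\Vdash A\rhd B$ iff for every $y$ with $xRy$, $y\Vdash A$ there is $z$ with $yS_xz$, $z\Vdash B$. $\mathbf{IL}\mathsf X$ is $\mathbf{IL}$ plus axiom schemes $\mathsf X$;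 it is Horn if there is a set $\mathcal C_{\mathsf X}$ of strict universal Horn sentences $\forall\cdots\forall(\varphi_1\wedge\dots\wedge\varphi_n\to\psi)$ ($n\ge0$, atomic $\varphi_i,\psi$) in the language $\{R,S\}$ such that an $\mathbf{IL}$-frame validates all theorems of $\mathbf{IL}\mathsf X$ iff it satisfies $\mathcal C_{\mathsf X}$; $\mathbf{IL}\mathsf X$-frames/models are those satisfying $\mathcal C_{\mathsf X}$. Labels: $0$; $\sigma Rn$ for a label $\sigma$, $n\in\mathbb N$; $\sigma S_\rho n$ for labels $\sigma,\rho$ with $\rho$ a strict non-empty prefix of $\sigma$. Extended formulas also allow unary operators $\Box_\rho$, $\rho$ a label. Labelled formula: $\sigma::A$. For a set $\Lambda$ of labels, $\mathbf R^\Lambda,\mathbf S^\Lambda$ are the least relations on $\Lambda$ with: (1) $\sigma,\sigma Rn\in\Lambda\Rightarrow\sigma\mathbf R\,\sigma Rn$; (2) $\mathbf R$ transitive; (3) $\sigma,\rho,\sigma S_\rho n\in\Lambda\Rightarrow\sigma\mathbf S_\rho\,\sigma S_\rho n$; (4) $\sigma\mathbf R\tau\Rightarrow\tau\mathbf S_\sigma\tau$; (5) $\rho\mathbf R\sigma\mathbf R\tau\Rightarrow\sigma\mathbf S_\rho\tau$; (6) $\sigma\mathbf S_\rho\tau\mathbf S_\rho\upsilon\Rightarrow\sigma\mathbf S_\rho\upsilon$; (7) $\sigma\mathbf S_\rho\tau\Rightarrow\rho\mathbf R\sigma,\rho\mathbf R\tau$; (8) $\langle\Lambda,\mathbf R^\Lambda,\mathbf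 S^\Lambda\rangle\models\mathcal C_{\mathsf X}$ (where $\sigma\mathbf S_\rho\tau$ means $(\rho,\sigma,\tau)\in\mathbf S^\Lambda$). For a branch $\mathcal B$, $\mathrm{lab}(\mathcal B)$ is the set of labels on it and relations refer to $\mathbf R^{\mathrm{lab}(\mathcal B)},\mathbf S^{\mathrm{lab}(\mathcal B)}$. A branch is closed if it contains $\sigma::A$ and $\sigma::\neg A$ for some $\sigma,A$, otherwise open. Systematic $\mathbf{IL}\mathsf X$-tableau for finite $\Gamma$: built in stages $T_0\subseteq T_1\subseteq\cdots$, nodes marked awake, asleep or finished. Stage 0: nodes $0::A$, $A\in\Gamma$, one below another, all awake. Stage $n+1$: choose an awake node $\sigma::A$ closest to the root (leftmost among ties). If $A$ is $p$ or $\neg p$ ($p\in\mathsf{Prop}$), mark it finished. Otherwise (new nodes marked awake; ''extend'' = append at the bottom): $\neg\neg B$: extend each open branch through it with $\sigma::B$; finished. $B\to C$: split each open branch through it, left $\sigma::\neg B$, right $\sigma::C$; finished. $\neg(B\to C)$: extend with $\sigma::B,\sigma::\neg C$; finished. $\Box B$: for each open branch $\mathcal B$ through it and each $\tau\in\mathrm{lab}(\mathcal B)$ with $\sigma\mathbf R\tau$, extend with $\tau::B$; asleep. $\neg\Box B$: for each open branch $\mathcal B$ through it, $n$ least with $\sigma Rn\notin\mathrm{lab}(\mathcal B)$, extend with $\sigma Rn::\neg B,\sigma Rn::\Box B$; finished; also mark awake every node $\tau::\Box D$, $\tau::D\rhd E$ on $\mathcal B$ with $\tau\mathbf R\,\sigma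 Rn$ and every $\tau::\Box_\kappa D$ on $\mathcal B$ with $\tau\mathbf S_\kappa\,\sigma Rn$. $\Box_\rho B$: for each branch $\mathcal B$ through it and each $\tau\in\mathrm{lab}(\mathcal B)$ with $\sigma\mathbf S_\rho\tau$, extend with $\tau::B$; asleep. $\neg\Box_\rho B$: for each open branch, $n$ least with $\sigma S_\rho n\notin\mathrm{lab}(\mathcal B)$, extend with $\sigma S_\rho n::\neg B,\sigma S_\rho n::\Box B$; finished; reawaken as in the $\neg\Box$ case with new label $\sigma S_\rho n$. $B\rhd C$: for each open branch $\mathcal B$ through it and each $\tau\in\mathrm{lab}(\mathcal B)$ with $\sigma\mathbf R\tau$, split, left $\tau::\neg B$, right $\tau::\neg\Box_\sigma\neg C$; asleep. $\neg(B\rhd C)$: for each open branch, $n$ least with $\sigma Rn\notin\mathrm{lab}(\mathcal B)$, extend with $\sigma Rn::B,\sigma Rn::\Box_\sigma\neg C,\sigma Rn::\Box\neg B$; finished; reawaken as in the $\neg\Box$ case. The systematic tableau is $\bigcup_iT_i$; it closes if all its branches are closed. *)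

(* Defs.v *)
From Stdlib Require Import List Arith.
Import ListNotations.

Inductive form : Type :=
| Var (p : nat)
| Neg (A : form)
| Imp (A B : form)
| Box (A : form)
| Rhd (A B : form).

Definition And (A B : form) : form := Neg (Imp A (Neg B)).
Definition Or (A B : form) : form := Imp (Neg A) B.
Definition Dia (A : form) : form := Neg (Box (Neg A)).

Fixpoint subst (s : nat -> form) (A : form) : form :=
  match A with
  | Var p => s p
  | Neg B => Neg (subst s B)
  | Imp B C => Imp (subst s B) (subst s C)
  | Box B => Box (subst s B)
  | Rhd B C => Rhd (subst s B) (subst s C)
  end.

Fixpoint is_prop (A : form) : Prop :=
  match A with
  | Var _ => True
  | Neg B => is_prop B
  | Imp B C => is_prop B /\ is_prop C
  | _ => False
  end.

Fixpoint beval (v : nat -> bool) (A : form) : bool :=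
  match A with
  | Var p => v p
  | Neg B => negb (beval v B)
  | Imp B C => implb (beval v B) (beval v C)
  | _ => false
  end.

Definition tautology (A : form) : Prop :=
  is_prop A /\ forall v, beval v A = true.

(* IL X : axiom schemes X are given as formulas whose propositional
   variables act as metavariables; their instances are substitution
   instances. *)
Inductive ILX (X : form -> Prop) : form -> Prop :=
| ax_taut : forall P s, tautology P -> ILX X (subst s P)
| ax_K : forall A B, ILX X (Imp (Box (Imp A B)) (Imp (Box A) (Box B)))
| ax_L : forall A, ILX X (Imp (Box (Imp (Box A) A)) (Box A))
| ax_J1 : forall A B, ILX X (Imp (Box (Imp A B)) (Rhd A B))
| ax_J2 : forall A B C, ILX X (Imp (And (Rhd A B) (Rhd B C)) (Rhd A C))
| ax_J3 : forall A B C, ILX X (Imp (And (Rhd A C) (Rhd B C)) (Rhd (Or A B) C))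
| ax_J4 : forall A B, ILX X (Imp (Rhd A B) (Imp (Dia A) (Dia B)))
| ax_J5 : forall A, ILX X (Rhd (Dia A) A)
| ax_X : forall P s, X P -> ILX X (subst s P)
| r_MP : forall A B, ILX X (Imp A B) -> ILX X A -> ILX X B
| r_Nec : forall A, ILX X A -> ILX X (Box A).

(* IL-frames and models.  Srel x y z  means  y S_x z.                  *)
Record ILFrame (W : Type) (Rel : W -> W -> Prop) (Srel : W -> W -> W -> Prop)
  : Prop := {
  fr_nonempty : inhabited W;
  fr_trans : forall x y z, Rel x y -> Rel y z -> Rel x z;
  fr_noeth : ~ exists f : nat -> W, forall n, Rel (f n) (f (S n));
  fr_S_dom : forall x y z, Srel x y z -> Rel x y /\ Rel x z;
  fr_S_refl : forall x y, Rel x y -> Srel x y y;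
  fr_S_trans : forall x y z u, Srel x y z -> Srel x z u -> Srel x y u;
  fr_RS : forall x y z, Rel x y -> Rel y z -> Srel x y z
}.

Fixpoint forces {W : Type} (Rel : W -> W -> Prop) (Srel : W -> W -> W -> Prop)
  (V : nat -> W -> Prop) (x : W) (A : form) : Prop :=
  match A with
  | Var p => V p x
  | Neg B => ~ forces Rel Srel V x B
  | Imp B C => forces Rel Srel V x B -> forces Rel Srel V x C
  | Box B => forall y, Rel x y -> forces Rel Srel V y B
  | Rhd B C => forall y, Rel x y -> forces Rel Srel V y B ->
                 exists z, Srel x y z /\ forces Rel Srel V z C
  end.

(* Variables are v_0, v_1, ... (nat).  HS i j k : (v_i,v_j,v_k) in S,  *)
(* i.e. v_j S_{v_i} v_k.                                               *)
Inductive hatom : Type :=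
| HR (i j : nat)
| HS (i j k : nat).

Record horn : Type := mkHorn { h_prem : list hatom; h_concl : hatom }.

Definition hatom_holds {D : Type} (Rel : D -> D -> Prop) (Srel : D -> D -> D -> Prop)
  (f : nat -> D) (a : hatom) : Prop :=
  match a with
  | HR i j => Rel (f i) (f j)
  | HS i j k => Srel (f i) (f j) (f k)
  end.

Definition horn_holds_in {D : Type} (dom : D -> Prop) (Rel : D -> D -> Prop)
  (Srel : D -> D -> D -> Prop) (h : horn) : Prop :=
  forall f : nat -> D, (forall i, dom (f i)) ->
    (forall a, In a (h_prem h) -> hatom_holds Rel Srel f a) ->
    hatom_holds Rel Srel f (h_concl h).

Definition horn_witness (X : form -> Prop) (C : horn -> Prop) : Prop :=
  forall (W : Type) (Rel : W -> W -> Prop) (Srel : W -> W -> W -> Prop),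
    ILFrame W Rel Srel ->
    ((forall A, ILX X A -> forall V x, forces Rel Srel V x A) <->
     (forall h, C h -> horn_holds_in (fun _ => True) Rel Srel h)).

Inductive label : Type :=
| L0
| LR (s : label) (n : nat)            (* s R n *)
| LS (s rho : label) (n : nat).       (* s S_rho n *)

Inductive xform : Type :=
| XVar (p : nat)
| XNeg (A : xform)
| XImp (A B : xform)
| XBox (A : xform)
| XRhd (A B : xform)
| XBoxL (rho : label) (A : xform).

Fixpoint emb (A : form) : xform :=
  match A with
  | Var p => XVar p
  | Neg B => XNeg (emb B)
  | Imp B C => XImp (emb B) (emb C)
  | Box B => XBox (emb B)
  | Rhd B C => XRhd (emb B) (emb C)
  end.

(* R^Lambda, S^Lambda : the least relations on Lambda with (1)-(8).
   FR a b : a R b ;  FS rho a b : a S_rho b. *)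
Inductive rfact : Type :=
| FR (a b : label)
| FS (rho a b : label).

Definition atom_fact (f : nat -> label) (a : hatom) : rfact :=
  match a with
  | HR i j => FR (f i) (f j)
  | HS i j k => FS (f i) (f j) (f k)
  end.

Inductive RSder (C : horn -> Prop) (L : label -> Prop) : rfact -> Prop :=
| d1 : forall s n, L s -> L (LR s n) -> RSder C L (FR s (LR s n))
| d2 : forall a b c, RSder C L (FR a b) -> RSder C L (FR b c) -> RSder C L (FR a c)
| d3 : forall s rho n, L s -> L rho -> L (LS s rho n) ->
       RSder C L (FS rho s (LS s rho n))
| d4 : forall s t, RSder C L (FR s t) -> RSder C L (FS s t t)
| d5 : forall r s t, RSder C L (FR r s) -> RSder C L (FR s t) -> RSder C L (FS r s t)
| d6 : forall r s t u, RSder C L (FS r s t) -> RSder C L (FS r t u) ->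
       RSder C L (FS r s u)
| d7a : forall r s t, RSder C L (FS r s t) -> RSder C L (FR r s)
| d7b : forall r s t, RSder C L (FS r s t) -> RSder C L (FR r t)
| d8 : forall h (f : nat -> label), C h -> (forall i, L (f i)) ->
       (forall a, In a (h_prem h) -> RSder C L (atom_fact f a)) ->
       RSder C L (atom_fact f (h_concl h)).

Definition Rl (C : horn -> Prop) (L : label -> Prop) (a b : label) : Prop :=
  RSder C L (FR a b).
Definition Sl (C : horn -> Prop) (L : label -> Prop) (rho a b : label) : Prop :=
  RSder C L (FS rho a b).

(* Tableaux: finite trees given as partial maps from positions (paths  *)
(* of child indices, 0 = left, 1 = right) to nodes.                    *)
Inductive status : Type := Awake | Asleep | Finished.

Record node : Type := mkNode { nlab : label; nfor : xform; nst : status }.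

Definition pos := list nat.
Definition tab := pos -> option node.

Definition prefix (r p : pos) : Prop := exists s, p = r ++ s.

Definition lab (T : tab) (p : pos) (s : label) : Prop :=
  exists r nd, prefix r p /\ T r = Some nd /\ nlab nd = s.

Definition is_leaf (T : tab) (p : pos) : Prop :=
  T p <> None /\ forall i, T (p ++ [i]) = None.

Definition open_br (T : tab) (p : pos) : Prop :=
  ~ exists r1 r2 n1 n2, prefix r1 p /\ prefix r2 p /\
      T r1 = Some n1 /\ T r2 = Some n2 /\
      nlab n1 = nlab n2 /\ nfor n2 = XNeg (nfor n1).

Fixpoint lex_le (a b : pos) : Prop :=
  match a, b with
  | [], _ => True
  | _ :: _, [] => False
  | x :: a', y :: b' => x < y \/ (x = y /\ lex_le a' b')
  end.

Definition selected (T : tab) (q : pos) : Prop :=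
  exists nd, T q = Some nd /\ nst nd = Awake /\
    forall q' nd', T q' = Some nd' -> nst nd' = Awake ->
      length q < length q' \/ (length q = length q' /\ lex_le q q').

Definition no_awake (T : tab) : Prop :=
  forall q nd, T q = Some nd -> nst nd <> Awake.

(* what is appended at the bottom of a branch: a sequence of linear
   extensions and splits, performed one after the other *)
Inductive entry : Type :=
| Lin (f : label * xform)
| Spl (f g : label * xform).

Definition entry_at (e : entry) (c : nat) : option (label * xform) :=
  match e with
  | Lin f => match c with 0 => Some f | _ => None end
  | Spl f g => match c with 0 => Some f | 1 => Some g | _ => None end
  end.

(* content of the new node at relative position w below the leaf *)
Fixpoint grown (es : list entry) (w : pos) : option (label * xform) :=
  match es, w with
  | e :: es', c :: w' =>
      match entry_at e c with
      | None => None
      | Some f => match w' with [] => Some f | _ => grown es' w' end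
      end
  | _, _ => None
  end.

Definition enum_of {A : Type} (l : list A) (P : A -> Prop) : Prop :=
  NoDup l /\ forall x, In x l <-> P x.

Definition freshR (L : label -> Prop) (s : label) (n : nat) : Prop :=
  ~ L (LR s n) /\ forall m, m < n -> L (LR s m).
Definition freshS (L : label -> Prop) (s rho : label) (n : nat) : Prop :=
  ~ L (LS s rho n) /\ forall m, m < n -> L (LS s rho m).

Definition rule_ext (C : horn -> Prop) (T : tab) (s : label) (A : xform)
  (p : pos) (es : list entry) : Prop :=
  let L := lab T p in
  match A with
  | XVar _ => es = []
  | XNeg (XVar _) => es = []
  | XNeg (XNeg B) => es = [Lin (s, B)]
  | XImp B D => es = [Spl (s, XNeg B) (s, D)]
  | XNeg (XImp B D) => es = [Lin (s, B); Lin (s, XNeg D)]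
  | XBox B => exists ts, enum_of ts (fun t => L t /\ Rl C L s t) /\
                es = map (fun t => Lin (t, B)) ts
  | XNeg (XBox B) => exists n, freshR L s n /\
                es = [Lin (LR s n, XNeg B); Lin (LR s n, XBox B)]
  | XBoxL rho B => exists ts, enum_of ts (fun t => L t /\ Sl C L rho s t) /\
                es = map (fun t => Lin (t, B)) ts
  | XNeg (XBoxL rho B) => exists n, freshS L s rho n /\
                es = [Lin (LS s rho n, XNeg B); Lin (LS s rho n, XBox B)]
  | XRhd B D => exists ts, enum_of ts (fun t => L t /\ Rl C L s t) /\
                es = map (fun t => Spl (t, XNeg B) (t, XNeg (XBoxL s (XNeg D)))) ts
  | XNeg (XRhd B D) => exists n, freshR L s n /\
                es = [Lin (LR s n, B); Lin (LR s n, XBoxL s (XNeg D));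
                      Lin (LR s n, XBox (XNeg B))]
  end.

Definition new_label (T : tab) (s : label) (A : xform) (p : pos) (k : label) : Prop :=
  match A with
  | XNeg (XBox _) => exists n, freshR (lab T p) s n /\ k = LR s n
  | XNeg (XRhd _ _) => exists n, freshR (lab T p) s n /\ k = LR s n
  | XNeg (XBoxL rho _) => exists n, freshS (lab T p) s rho n /\ k = LS s rho n
  | _ => False
  end.

Definition after_status (A : xform) : status :=
  match A with
  | XBox _ => Asleep
  | XBoxL _ _ => Asleep
  | XRhd _ _ => Asleep
  | _ => Finished
  end.

(* Box_rho rules act on every branch, the others on open branches *)
Definition all_branches (A : xform) : Prop :=
  match A with XBoxL _ _ => True | _ => False end.

Definition processed (T : tab) (q : pos) (A : xform) (p : pos) : Prop :=
  is_leaf T p /\ prefix q p /\ (open_br T p \/ all_branches A).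

Definition reawakens (C : horn -> Prop) (L : label -> Prop) (k : label) (nd : node) : Prop :=
  match nfor nd with
  | XBox _ => Rl C L (nlab nd) k
  | XRhd _ _ => Rl C L (nlab nd) k
  | XBoxL kap _ => Sl C L kap (nlab nd) k
  | _ => False
  end.

Definition add_lab (L : label -> Prop) (k : label) : label -> Prop :=
  fun t => L t \/ t = k.

Definition reawake (C : horn -> Prop) (T : tab) (q : pos) (s : label) (A : xform)
  (r : pos) : Prop :=
  exists p k nd, processed T q A p /\ prefix r p /\ new_label T s A p k /\
    T r = Some nd /\ reawakens C (add_lab (lab T p) k) k nd.

Definition step (C : horn -> Prop) (T T' : tab) : Prop :=
  (no_awake T /\ forall r, T' r = T r) \/
  exists q nd (E : pos -> list entry),
    selected T q /\ T q = Some nd /\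
    (forall p, processed T q (nfor nd) p ->
       rule_ext C T (nlab nd) (nfor nd) p (E p)) /\
    forall r,
      (forall m, T r = Some m ->
         (r = q -> T' r = Some (mkNode (nlab m) (nfor m) (after_status (nfor nd)))) /\
         (r <> q -> reawake C T q (nlab nd) (nfor nd) r ->
            T' r = Some (mkNode (nlab m) (nfor m) Awake)) /\
         (r <> q -> ~ reawake C T q (nlab nd) (nfor nd) r -> T' r = Some m)) /\
      (T r = None ->
         (forall p w f, processed T q (nfor nd) p -> r = p ++ w ->
            grown (E p) w = Some f -> T' r = Some (mkNode (fst f) (snd f) Awake)) /\
         ((~ exists p w f, processed T q (nfor nd) p /\ r = p ++ w /\
               grown (E p) w = Some f) -> T' r = None)).

Fixpoint init_tab (G : list xform) (r : pos) : option node :=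
  match G, r with
  | A :: _, [] => Some (mkNode L0 A Awake)
  | _ :: G', 0 :: r' => init_tab G' r'
  | _, _ => None
  end.

Definition systematic (C : horn -> Prop) (G : list xform) (stage : nat -> tab) : Prop :=
  (forall r, stage 0 r = init_tab G r) /\
  forall n, step C (stage n) (stage (S n)).

Definition in_union (stage : nat -> tab) (r : pos) : Prop :=
  exists n, stage n r <> None.

Definition union_branch (stage : nat -> tab) (P : pos -> Prop) : Prop :=
  P [] /\
  (forall r, P r -> in_union stage r) /\
  (forall r r', P r -> prefix r' r -> P r') /\
  (forall r1 r2, P r1 -> P r2 -> prefix r1 r2 \/ prefix r2 r1) /\
  (forall r, P r -> (exists i, in_union stage (r ++ [i])) -> exists i, P (r ++ [i])).

Definition branch_closed (stage : nat -> tab) (P : pos -> Prop) : Prop :=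
  exists r1 r2 n n1 n2, P r1 /\ P r2 /\ stage n r1 = Some n1 /\ stage n r2 = Some n2 /\
    nlab n1 = nlab n2 /\ nfor n2 = XNeg (nfor n1).

Definition tableau_closes (stage : nat -> tab) : Prop :=
  forall P, union_branch stage P -> branch_closed stage P.

(* Main.v *)
Require Import Defs.
From Stdlib Require Import List Arith Lia Classical ClassicalEpsilon FunctionalExtensionality.
Import ListNotations.

Lemma prefix_refl p : prefix p p.
Proof. exists []. now rewrite app_nil_r. Qed.
Lemma prefix_app p w : prefix p (p ++ w).
Proof. now exists w. Qed.
Lemma prefix_trans a b c : prefix a b -> prefix b c -> prefix a c.
Proof. intros [u ->] [v ->]. exists (u ++ v). now rewrite app_assoc. Qed.
Lemma prefix_nil p : prefix [] p.
Proof. now exists p. Qed.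
Lemma prefix_cmp a b c : prefix a c -> prefix b c -> prefix a b \/ prefix b a.
Proof.
  intros [u Hu] [v Hv]. rewrite Hu in Hv.
  destruct (app_eq_app _ _ _ _ Hv) as [l [[H1 _]|[H1 _]]].
  - right. now exists l.
  - left. now exists l.
Qed.
Lemma prefix_nil_inv r : prefix r [] -> r = [].
Proof. intros [u Hu]. now destruct r. Qed.

Definition tree_closed (T : tab) : Prop :=
  forall r s, T (r ++ s) <> None -> T r <> None.

Lemma leaf_below T p u : tree_closed T -> is_leaf T p -> u <> [] -> T (p ++ u) = None.
Proof.
  intros Htc [Hp Hl] Hu. destruct u as [|i u]; [congruence|].
  destruct (T (p ++ i :: u)) eqn:E; auto. exfalso.
  apply (Htc (p ++ [i]) u); [rewrite <- app_assoc; simpl; congruence | apply Hl].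
Qed.

Lemma leaf_cmp T p u : tree_closed T -> is_leaf T p -> T (p ++ u) <> None -> u = [].
Proof.
  intros Htc Hl H. destruct u; auto. exfalso. apply H. apply leaf_below; auto; congruence.
Qed.

Lemma tc_prefix T r p : tree_closed T -> T p <> None -> prefix r p -> T r <> None.
Proof. intros Htc Hp [u ->]. eapply Htc; eauto. Qed.

Lemma grown_nil es : grown es [] = None.
Proof. destruct es; reflexivity. Qed.

Lemma grown_app es u v : grown es (u ++ v) <> None -> u <> [] -> grown es u <> None.
Proof.
  revert u. induction es as [|e es IH]; intros u H Hu.
  - destruct u; simpl in *; congruence.
  - destruct u as [|c u]; [congruence|]. simpl in *.
    destruct (entry_at e c) eqn:E; [|congruence].
    destruct u as [|c' u]; [congruence|].
    simpl in H. apply (IH (c' :: u)); [exact H| congruence].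
Qed.

Fixpoint vpath (es : list entry) (w : pos) : Prop :=
  match es, w with
  | [], [] => True
  | e :: es', c :: w' => entry_at e c <> None /\ vpath es' w'
  | _, _ => False
  end.

Lemma vpath_end es w i : vpath es w -> grown es (w ++ [i]) = None.
Proof.
  revert w. induction es as [|e es IH]; intros w H.
  - destruct w; simpl in *; [reflexivity|contradiction].
  - destruct w as [|c w]; simpl in *; [contradiction|]. destruct H as [H1 H2].
    destruct (entry_at e c); [|reflexivity].
    destruct (w ++ [i]) eqn:E; [destruct w; discriminate|].
    rewrite <- E. apply IH; auto.
Qed.

Lemma vpath_full es w : vpath es w -> w <> [] -> grown es w <> None.
Proof.
  revert w. induction es as [|e es IH]; intros w H Hw.
  - destruct w; simpl in *; [congruence|contradiction].
  - destruct w as [|c w]; simpl in *; [contradiction|]. destruct H as [H1 H2].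
    destruct (entry_at e c); [|congruence].
    destruct w; [congruence|]. apply IH; auto; congruence.
Qed.

Lemma vpath_prefix es w u : vpath es w -> u <> [] -> prefix u w -> grown es u <> None.
Proof.
  intros H Hu [v ->]. apply (grown_app es u v); auto.
  apply vpath_full; auto. destruct u; [congruence|discriminate].
Qed.

Lemma good_path (G : label * xform -> Prop) es :
  (forall e, In e es -> exists c g, entry_at e c = Some g /\ G g) ->
  exists w, vpath es w /\ forall u g, grown es u = Some g -> prefix u w -> G g.
Proof.
  induction es as [|e es IH]; intros H.
  - exists []. split; [exact I|]. intros u g Hg _.
    destruct u; simpl in Hg; discriminate.
  - destruct (H e (or_introl eq_refl)) as [c [g [Hc Hg]]].
    destruct IH as [w [Hw Hw2]]; [intros; apply H; now right|].
    exists (c :: w). split; [simpl; split; congruence|].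
    intros u g' Hu [v Hv]. destruct u as [|c' u]; [simpl in Hu; discriminate|].
    simpl in Hv. injection Hv as -> Hv. simpl in Hu. rewrite Hc in Hu.
    destruct u as [|c'' u]; [congruence|].
    apply (Hw2 (c'' :: u)); auto. now exists v.
Qed.
Section StepS.
Variable C : horn -> Prop.
Variables (T T' : tab) (q : pos) (nd : node) (E : pos -> list entry).
Hypothesis HT : forall r,
      (forall m, T r = Some m ->
         (r = q -> T' r = Some (mkNode (nlab m) (nfor m) (after_status (nfor nd)))) /\
         (r <> q -> reawake C T q (nlab nd) (nfor nd) r ->
            T' r = Some (mkNode (nlab m) (nfor m) Awake)) /\
         (r <> q -> ~ reawake C T q (nlab nd) (nfor nd) r -> T' r = Some m)) /\
      (T r = None ->
         (forall p w f, processed T q (nfor nd) p -> r = p ++ w ->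
            grown (E p) w = Some f -> T' r = Some (mkNode (fst f) (snd f) Awake)) /\
         ((~ exists p w f, processed T q (nfor nd) p /\ r = p ++ w /\
               grown (E p) w = Some f) -> T' r = None)).

Let Pr p := processed T q (nfor nd) p.

Lemma S1 r m : T r = Some m -> exists m', T' r = Some m' /\ nlab m' = nlab m /\ nfor m' = nfor m.
Proof.
  intros Hm. destruct (HT r) as [H _]. destruct (H m Hm) as [Ha [Hb Hc]].
  destruct (classic (r = q)) as [e|ne].
  - eexists; split; [apply Ha; auto|]; simpl; auto.
  - destruct (classic (reawake C T q (nlab nd) (nfor nd) r)).
    + eexists; split; [apply Hb; auto|]; simpl; auto.
    + eexists; split; [apply Hc; auto|]; auto.
Qed.

Lemma S3 r p0 w g : T r = None -> Pr p0 -> r = p0 ++ w -> grown (E p0) w = Some g ->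
  T' r = Some (mkNode (fst g) (snd g) Awake).
Proof. intros H. destruct (HT r) as [_ H2]. apply (proj1 (H2 H)). Qed.

Lemma S4 r : T' r <> None -> T r <> None \/ exists p0 w g, Pr p0 /\ r = p0 ++ w /\ grown (E p0) w = Some g.
Proof.
  intros H. destruct (T r) eqn:E1; [left; congruence|]. right.
  apply NNPP. intros Hn. apply H. destruct (HT r) as [_ H2]. apply (proj2 (H2 E1)). exact Hn.
Qed.

Lemma S1' r : T r <> None -> T' r <> None.
Proof. intros H. destruct (T r) eqn:E1; [|congruence]. destruct (S1 r n E1) as [m' [-> _]]; congruence. Qed.

Lemma tc_step : tree_closed T -> tree_closed T'.
Proof.
  intros Htc r s H. destruct (S4 _ H) as [H1|[p0 [w [g [Hp [Hr Hg]]]]]].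
  - apply S1'. eapply Htc; eauto.
  - destruct (app_eq_app _ _ _ _ Hr) as [l [[Ha Hb]|[Ha Hb]]].
    +
      destruct l as [|c l].
      * rewrite app_nil_r in Ha. subst. apply S1'. destruct Hp as [[Hl _] _]. auto.
      * destruct (T r) eqn:Er; [apply S1'; congruence|].
        assert (Hgl : grown (E p0) (c :: l) <> None) by (apply (grown_app _ _ s); [rewrite <- Hb; congruence|discriminate]).
        destruct (grown (E p0) (c :: l)) eqn:G; [|congruence].
        rewrite (S3 r p0 (c :: l) p Er Hp Ha G). discriminate.
    +
      apply S1'. destruct Hp as [[Hl _] _]. apply (Htc r l). congruence.
Qed.

Lemma path_lemma p w : tree_closed T -> is_leaf T p ->
  (Pr p -> vpath (E p) w) -> (~ Pr p -> w = []) ->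
  is_leaf T' (p ++ w) /\
  (forall r nd', prefix r (p ++ w) -> T' r = Some nd' ->
     (exists m, prefix r p /\ T r = Some m /\ nlab nd' = nlab m /\ nfor nd' = nfor m) \/
     (exists u g, u <> [] /\ prefix u w /\ grown (E p) u = Some g /\ nlab nd' = fst g /\ nfor nd' = snd g)) /\
  (forall u g, u <> [] -> prefix u w -> grown (E p) u = Some g ->
     T' (p ++ u) = Some (mkNode (fst g) (snd g) Awake)).
Proof.
  intros Htc Hl Hv Hnv.
  assert (Hnew : forall u g, u <> [] -> prefix u w -> grown (E p) u = Some g ->
     T' (p ++ u) = Some (mkNode (fst g) (snd g) Awake)).
  { intros u g Hu Hpre Hg. eapply S3; eauto.
    - apply leaf_below; auto.
    - destruct (classic (Pr p)) as [HP|HP]; auto. exfalso.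
      rewrite (Hnv HP) in Hpre. apply prefix_nil_inv in Hpre. congruence. }
  split; [|split; [|exact Hnew]].
  - split.
    + destruct w as [|c w'].
      * rewrite app_nil_r. apply S1'. apply Hl.
      * destruct (classic (Pr p)) as [HP|HP]; [|specialize (Hnv HP); discriminate].
        assert (Hne : c :: w' <> []) by discriminate.
        pose proof (vpath_full _ _ (Hv HP) Hne) as Hg.
        destruct (grown (E p) (c :: w')) eqn:G; [|congruence].
        rewrite (Hnew (c :: w') p0); [discriminate|discriminate|apply prefix_refl|auto].
    + intros i. destruct (T' ((p ++ w) ++ [i])) eqn:E1; auto. exfalso.
      assert (HN : T' ((p ++ w) ++ [i]) <> None) by congruence.
      destruct (S4 _ HN) as [H1|[p0 [v [g [Hp [Hr Hg]]]]]].
      * apply H1. rewrite <- app_assoc. apply leaf_below; auto. destruct w; discriminate.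
      * rewrite <- app_assoc in Hr.
        destruct (app_eq_app _ _ _ _ Hr) as [l [[Ha Hb]|[Ha Hb]]].
        --
           assert (l = []) as ->.
           { destruct Hp as [Hl0 _]. apply (leaf_cmp T p0 l Htc Hl0). rewrite <- Ha. apply Hl. }
           rewrite app_nil_r in Ha. subst p0. simpl in Hb. subst v.
           rewrite vpath_end in Hg; [discriminate|]. apply Hv; auto.
        --
           assert (l = []) as ->.
           { apply (leaf_cmp T p l Htc Hl). rewrite <- Ha. destruct Hp as [[Hq _] _]. auto. }
           rewrite app_nil_r in Ha. subst p0. simpl in Hb. subst v.
           rewrite vpath_end in Hg; [discriminate|]. apply Hv; auto.
  - intros r nd' Hr Hnd. destruct Hr as [s Hs].
    destruct (app_eq_app _ _ _ _ Hs) as [l [[Ha Hb]|[Ha Hb]]].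
    +
      left. assert (Hr : prefix r p) by (exists l; auto).
      assert (T r <> None) by (eapply tc_prefix; eauto; apply Hl).
      destruct (T r) eqn:Er; [|congruence].
      destruct (S1 r n Er) as [m' [Hm1 Hm2]]. rewrite Hnd in Hm1. injection Hm1 as <-.
      exists n. auto.
    +
      destruct l as [|c l].
      * left. rewrite app_nil_r in Ha. subst r.
        destruct (T p) eqn:Er; [|destruct Hl; congruence].
        destruct (S1 p n Er) as [m' [Hm1 Hm2]]. rewrite Hnd in Hm1. injection Hm1 as <-.
        exists n. split; [apply prefix_refl|auto].
      * right. destruct (classic (Pr p)) as [HP|HP]; [|rewrite (Hnv HP) in Hb; simpl in Hb; discriminate Hb].
        assert (Hpre : prefix (c :: l) w) by (exists s; auto).
        assert (Hne : c :: l <> []) by discriminate.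
        pose proof (vpath_prefix _ _ _ (Hv HP) Hne Hpre) as G.
        destruct (grown (E p) (c :: l)) eqn:Gs; [|congruence].
        rewrite Ha, (Hnew (c :: l) p0) in Hnd; auto.
        injection Hnd as <-. exists (c :: l), p0. simpl. repeat split; auto; discriminate.
Qed.
End StepS.
Section Sem.
Variable C : horn -> Prop.
Variables (W : Type) (Rel : W -> W -> Prop) (Srel : W -> W -> W -> Prop) (V : nat -> W -> Prop).
Hypothesis HF : ILFrame W Rel Srel.
Hypothesis HC : forall h, C h -> horn_holds_in (fun _ => True) Rel Srel h.

Fixpoint xforces (f : label -> W) (w : W) (A : xform) : Prop :=
  match A with
  | XVar p => V p w
  | XNeg B => ~ xforces f w B
  | XImp B D => xforces f w B -> xforces f w D
  | XBox B => forall y, Rel w y -> xforces f y B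
  | XRhd B D => forall y, Rel w y -> xforces f y B -> exists z, Srel w y z /\ xforces f z D
  | XBoxL rho B => forall t, Srel (f rho) w t -> xforces f t B
  end.

Fixpoint lok (L : label -> Prop) (A : xform) : Prop :=
  match A with
  | XVar _ => True
  | XNeg B => lok L B
  | XImp B D => lok L B /\ lok L D
  | XBox B => lok L B
  | XRhd B D => lok L B /\ lok L D
  | XBoxL rho B => L rho /\ lok L B
  end.

Lemma lok_mono (L L' : label -> Prop) A : (forall t, L t -> L' t) -> lok L A -> lok L' A.
Proof. intros H; induction A; simpl; intuition. Qed.

Lemma xforces_agree (L : label -> Prop) f f' A : (forall t, L t -> f' t = f t) -> lok L A ->
  forall w, xforces f w A <-> xforces f' w A.
Proof.
  intros Hag. induction A; simpl; intros Hl w.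
  - tauto.
  - rewrite IHA; tauto.
  - destruct Hl. rewrite IHA1, IHA2; tauto.
  - split; intros H y Hy; apply IHA; auto.
  - destruct Hl as [H1 H2]. split; intros H y Hy Hb.
    + destruct (H y Hy) as [z [Hz Hz2]]; [apply IHA1; auto|]. exists z. split; auto. apply IHA2; auto.
    + destruct (H y Hy) as [z [Hz Hz2]]; [apply IHA1; auto|]. exists z. split; auto. apply IHA2; auto.
  - destruct Hl as [H1 H2]. rewrite (Hag rho H1). split; intros H t Ht; apply IHA; auto.
Qed.

Lemma xforces_emb f w A : xforces f w (emb A) <-> forces Rel Srel V w A.
Proof.
  revert w. induction A; simpl; intros w.
  - tauto.
  - rewrite IHA; tauto.
  - rewrite IHA1, IHA2; tauto.
  - split; intros H y Hy; apply IHA; auto.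
  - split; intros H y Hy Hb.
    + destruct (H y Hy) as [z [Hz Hz2]]; [apply IHA1; auto|]. exists z. split; auto. apply IHA2; auto.
    + destruct (H y Hy) as [z [Hz Hz2]]; [apply IHA1; auto|]. exists z. split; auto. apply IHA2; auto.
Qed.

Lemma lok_emb L A : lok L (emb A).
Proof. induction A; simpl; auto. Qed.

Definition fholds (f : label -> W) (a : rfact) : Prop :=
  match a with
  | FR a b => Rel (f a) (f b)
  | FS r a b => Srel (f r) (f a) (f b)
  end.

Lemma RSder_sound (L : label -> Prop) f :
  (forall s n, L (LR s n) -> L s /\ Rel (f s) (f (LR s n))) ->
  (forall s r n, L (LS s r n) -> L s /\ L r /\ Srel (f r) (f s) (f (LS s r n))) ->
  forall a, RSder C L a -> fholds f a.
Proof.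
  intros H2 H3 a Hd. induction Hd; simpl in *.
  - apply H2; auto.
  - eapply (fr_trans _ _ _ HF); eauto.
  - apply H3; auto.
  - apply (fr_S_refl _ _ _ HF); auto.
  - apply (fr_RS _ _ _ HF); auto.
  - eapply (fr_S_trans _ _ _ HF); eauto.
  - exact (proj1 (fr_S_dom _ _ _ HF _ _ _ IHHd)).
  - exact (proj2 (fr_S_dom _ _ _ HF _ _ _ IHHd)).
  - pose proof (HC h H (fun i => f (f0 i)) (fun _ => I)) as Hh.
    assert (Hat : forall a, hatom_holds Rel Srel (fun i => f (f0 i)) a <-> fholds f (atom_fact f0 a))
      by (intros []; simpl; tauto).
    apply Hat, Hh. intros a Ha. apply Hat; auto.
Qed.

Lemma max_elem (Q : W -> Prop) y0 : Q y0 -> exists y, Q y /\ forall z, Rel y z -> ~ Q z.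
Proof.
  intros H0. apply NNPP. intros Hn.
  assert (Hs : forall y : {y | Q y}, exists z : {z | Q z}, Rel (proj1_sig y) (proj1_sig z)).
  { intros [y Hy]. apply NNPP. intros Hn2. apply Hn. exists y. split; auto.
    intros z Hz Qz. apply Hn2. exists (exist _ z Qz). simpl; auto. }
  pose (g := fun y => proj1_sig (constructive_indefinite_description _ (Hs y))).
  assert (Hg : forall y, Rel (proj1_sig y) (proj1_sig (g y)))
    by (intros y; unfold g; destruct (constructive_indefinite_description _ (Hs y)); auto).
  apply (fr_noeth _ _ _ HF).
  exists (fun n => proj1_sig (Nat.iter n g (exist _ y0 H0))).
  intros n. simpl. apply Hg.
Qed.

Definition sat (T : tab) (p : pos) : Prop :=
  is_leaf T p /\ exists f : label -> W,
   (forall r nd, prefix r p -> T r = Some nd ->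
       xforces f (f (nlab nd)) (nfor nd) /\ lok (lab T p) (nfor nd)) /\
   (forall s n, lab T p (LR s n) -> lab T p s /\ Rel (f s) (f (LR s n))) /\
   (forall s r n, lab T p (LS s r n) -> lab T p s /\ lab T p r /\ Srel (f r) (f s) (f (LS s r n))).


Lemma label_eq_dec (a b : label) : {a = b} + {a <> b}.
Proof. decide equality; apply Nat.eq_dec. Qed.

Definition upd (f : label -> W) (k : label) (y : W) : label -> W :=
  fun t => if label_eq_dec t k then y else f t.

Lemma upd_k f k y : upd f k y k = y.
Proof. unfold upd. destruct (label_eq_dec k k); congruence. Qed.

Lemma upd_agree (L : label -> Prop) f k y : ~ L k -> forall t, L t -> upd f k y t = f t.
Proof. intros Hk t Ht. unfold upd. destruct (label_eq_dec t k); congruence. Qed.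

Lemma upd_I2 (L : label -> Prop) f k y :
  (forall s n, L (LR s n) -> L s /\ Rel (f s) (f (LR s n))) -> ~ L k ->
  (forall s n, LR s n = k -> L s /\ Rel (f s) y) ->
  forall s n, add_lab L k (LR s n) -> add_lab L k s /\ Rel (upd f k y s) (upd f k y (LR s n)).
Proof.
  intros I2 Hk Hn s n [H|H].
  - destruct (I2 s n H) as [H1 H2]. split; [left; auto|].
    rewrite !(upd_agree L); auto.
  - destruct (Hn s n H) as [H1 H2]. split; [left; auto|]. rewrite H, upd_k, (upd_agree L); auto.
Qed.

Lemma upd_I3 (L : label -> Prop) f k y :
  (forall s r n, L (LS s r n) -> L s /\ L r /\ Srel (f r) (f s) (f (LS s r n))) -> ~ L k ->
  (forall s r n, LS s r n = k -> L s /\ L r /\ Srel (f r) (f s) y) ->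
  forall s r n, add_lab L k (LS s r n) -> add_lab L k s /\ add_lab L k r /\
      Srel (upd f k y r) (upd f k y s) (upd f k y (LS s r n)).
Proof.
  intros I3 Hk Hn s r n [H|H].
  - destruct (I3 s r n H) as [H1 [H2 H3]]. split; [left; auto|]. split; [left; auto|].
    rewrite !(upd_agree L); auto.
  - destruct (Hn s r n H) as [H1 [H2 H3]]. split; [left; auto|]. split; [left; auto|].
    rewrite H, upd_k, !(upd_agree L); auto.
Qed.

Section StepSat.
Variables (T T' : tab) (q : pos) (nd : node) (E : pos -> list entry).
Hypothesis HT : forall r,
      (forall m, T r = Some m ->
         (r = q -> T' r = Some (mkNode (nlab m) (nfor m) (after_status (nfor nd)))) /\
         (r <> q -> reawake C T q (nlab nd) (nfor nd) r ->
            T' r = Some (mkNode (nlab m) (nfor m) Awake)) /\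
         (r <> q -> ~ reawake C T q (nlab nd) (nfor nd) r -> T' r = Some m)) /\
      (T r = None ->
         (forall p w f, processed T q (nfor nd) p -> r = p ++ w ->
            grown (E p) w = Some f -> T' r = Some (mkNode (fst f) (snd f) Awake)) /\
         ((~ exists p w f, processed T q (nfor nd) p /\ r = p ++ w /\
               grown (E p) w = Some f) -> T' r = None)).
Hypothesis Htc : tree_closed T.

Lemma finish p w (f f' : label -> W) (L' : label -> Prop) :
  is_leaf T p ->
  (processed T q (nfor nd) p -> vpath (E p) w) -> (~ processed T q (nfor nd) p -> w = []) ->
  (forall r nd, prefix r p -> T r = Some nd ->
       xforces f (f (nlab nd)) (nfor nd) /\ lok (lab T p) (nfor nd)) ->
  (forall t, lab T p t -> L' t) ->
  (forall t, lab T p t -> f' t = f t) ->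
  (forall s n, L' (LR s n) -> L' s /\ Rel (f' s) (f' (LR s n))) ->
  (forall s r n, L' (LS s r n) -> L' s /\ L' r /\ Srel (f' r) (f' s) (f' (LS s r n))) ->
  (forall u g, u <> [] -> prefix u w -> grown (E p) u = Some g ->
     L' (fst g) /\ xforces f' (f' (fst g)) (snd g) /\ lok L' (snd g)) ->
  (forall t, L' t -> lab T p t \/ exists u g, u <> [] /\ prefix u w /\ grown (E p) u = Some g /\ fst g = t) ->
  sat T' (p ++ w).
Proof.
  intros Hl Hv Hnv I1 F1 F2 F3 F4 F5 F6.
  destruct (path_lemma C T T' q nd E HT p w Htc Hl Hv Hnv) as [Hl' [Hpath Hnew]].
  assert (Hlab : forall t, lab T' (p ++ w) t <-> L' t).
  { intros t; split.
    - intros [r [nd' [Hr [Hnd Ht]]]]. destruct (Hpath r nd' Hr Hnd) as [[m [Hm1 [Hm2 [Hm3 _]]]]|[u [g [Hu [Hu2 [Hg [Hg2 _]]]]]]].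
      + apply F1. exists r, m. split; auto. split; auto. congruence.
      + subst t. rewrite Hg2. apply (F5 u g); auto.
    - intros Ht. destruct (F6 t Ht) as [[r [m [Hr [Hm Hmt]]]]|[u [g [Hu [Hu2 [Hg Hgt]]]]]].
      + destruct (S1 C T T' q nd E HT r m Hm) as [m' [Hm' [Hl1 _]]].
        exists r, m'. split; [eapply prefix_trans; [exact Hr|apply prefix_app]|]. split; auto. congruence.
      + exists (p ++ u), (mkNode (fst g) (snd g) Awake). split.
        * destruct Hu2 as [v ->]. rewrite app_assoc. apply prefix_app.
        * split; auto. }
  split; auto. exists f'. split; [|split].
  - intros r nd' Hr Hnd. destruct (Hpath r nd' Hr Hnd) as [[m [Hm1 [Hm2 [Hm3 Hm4]]]]|[u [g [Hu [Hu2 [Hg [Hg2 Hg3]]]]]]].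
    + destruct (I1 r m Hm1 Hm2) as [X1 X2]. rewrite Hm3, Hm4.
      assert (HL : lab T p (nlab m)) by (exists r, m; auto).
      rewrite (F2 _ HL). split.
      * apply (xforces_agree _ f f' _ F2 X2). auto.
      * apply (lok_mono L'); [intros t Ht; apply Hlab; auto|]. apply (lok_mono (lab T p)); auto.
    + rewrite Hg2, Hg3. destruct (F5 u g Hu Hu2 Hg) as [X1 [X2 X3]]. split; auto.
      apply (lok_mono L'); auto. intros t Ht; apply Hlab; auto.
  - intros s n Hs. rewrite Hlab in Hs. rewrite Hlab. auto.
  - intros s r n Hs. rewrite Hlab in Hs. rewrite !Hlab. auto.
Qed.


Lemma use_simple p f :
  processed T q (nfor nd) p ->
  (forall r nd, prefix r p -> T r = Some nd ->
       xforces f (f (nlab nd)) (nfor nd) /\ lok (lab T p) (nfor nd)) ->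
  (forall s n, lab T p (LR s n) -> lab T p s /\ Rel (f s) (f (LR s n))) ->
  (forall s r n, lab T p (LS s r n) -> lab T p s /\ lab T p r /\ Srel (f r) (f s) (f (LS s r n))) ->
  (forall e, In e (E p) -> exists c g, entry_at e c = Some g /\
      lab T p (fst g) /\ xforces f (f (fst g)) (snd g) /\ lok (lab T p) (snd g)) ->
  exists p', prefix p p' /\ sat T' p'.
Proof.
  intros HP I1 I2 I3 He.
  destruct (good_path _ _ He) as [w [Hw Hw2]].
  exists (p ++ w). split; [apply prefix_app|].
  apply (finish p w f f (lab T p)); auto.
  - destruct HP as [Hl _]; auto.
  - intros HnP. contradiction.
  - intros u g _ Hu Hg. exact (Hw2 u g Hg Hu).
Qed.

Lemma use_fresh p f k y A1 rest :
  processed T q (nfor nd) p ->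
  (forall r nd, prefix r p -> T r = Some nd ->
       xforces f (f (nlab nd)) (nfor nd) /\ lok (lab T p) (nfor nd)) ->
  ~ lab T p k -> E p = Lin (k, A1) :: rest ->
  (forall s n, add_lab (lab T p) k (LR s n) -> add_lab (lab T p) k s /\ Rel (upd f k y s) (upd f k y (LR s n))) ->
  (forall s r n, add_lab (lab T p) k (LS s r n) -> add_lab (lab T p) k s /\ add_lab (lab T p) k r /\
      Srel (upd f k y r) (upd f k y s) (upd f k y (LS s r n))) ->
  (forall e, In e (E p) -> exists c g, entry_at e c = Some g /\
      add_lab (lab T p) k (fst g) /\ xforces (upd f k y) (upd f k y (fst g)) (snd g) /\
      lok (add_lab (lab T p) k) (snd g)) ->
  exists p', prefix p p' /\ sat T' p'.
Proof.
  intros HP I1 Hk HE I2 I3 He.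
  destruct (good_path _ _ He) as [w [Hw Hw2]].
  exists (p ++ w). split; [apply prefix_app|].
  apply (finish p w f (upd f k y) (add_lab (lab T p) k)); auto.
  - destruct HP as [Hl _]; auto.
  - intros HnP. contradiction.
  - intros t Ht; left; auto.
  - apply upd_agree; auto.
  - intros u g _ Hu Hg. exact (Hw2 u g Hg Hu).
  - intros t [Ht|Ht]; [left; auto|right].
    pose proof Hw as Hv. rewrite HE in Hv. destruct w as [|c w']; [contradiction|].
    destruct Hv as [Hc _]. destruct c as [|c]; [|simpl in Hc; congruence].
    exists [0], (k, A1). repeat split; try discriminate.
    + exists w'. reflexivity.
    + rewrite HE. reflexivity.
    + simpl. auto.
Qed.

Lemma sat_step2 p : sat T p -> T q = Some nd ->
  (forall p, processed T q (nfor nd) p -> rule_ext C T (nlab nd) (nfor nd) p (E p)) ->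
  exists p', prefix p p' /\ sat T' p'.
Proof.
  intros [Hl [f [I1 [I2 I3]]]] Hq Hrule.
  destruct (classic (processed T q (nfor nd) p)) as [HP|HP].
  2:{ exists (p ++ []). split; [apply prefix_app|].
      apply (finish p [] f f (lab T p)); auto.
      - intros; contradiction.
      - intros u g Hu Hpre. apply prefix_nil_inv in Hpre. contradiction. }
  pose proof (Hrule p HP) as Hr.
  assert (HP2 := HP). destruct HP2 as [HPl [Hqp HPo]].
  destruct (I1 q nd Hqp Hq) as [X Xl].
  assert (Ls : lab T p (nlab nd)) by (exists q, nd; auto).
  pose proof (RSder_sound _ f I2 I3) as HR.
  unfold rule_ext in Hr.
  set (s := nlab nd) in *. set (L := lab T p) in *.
  revert X Xl Hr. generalize (nfor nd). intros A X Xl Hr.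
  destruct A as [v|B|B D|B|B D|rho B].
  - apply (use_simple p f); auto. rewrite Hr. simpl; tauto.
  - destruct B as [v|B|B D|B|B D|rho B].
    + apply (use_simple p f); auto. rewrite Hr. simpl; tauto.
    + apply (use_simple p f); auto. rewrite Hr. intros e [<-|[]].
      exists 0, (s, B). simpl in *. repeat split; auto. apply NNPP. auto.
    + apply (use_simple p f); auto. rewrite Hr. simpl in X, Xl.
      intros e [<-|[<-|[]]].
      * exists 0, (s, B). simpl. repeat split; try tauto; apply NNPP; tauto.
      * exists 0, (s, XNeg D). simpl. repeat split; tauto.
    + destruct Hr as [n [[Hn _] Hr]]. simpl in X, Xl.
      assert (Hex : exists y0, Rel (f s) y0 /\ ~ xforces f y0 B).
      { apply NNPP. intros Hne. apply X. intros y Hy. apply NNPP. intros Hb. apply Hne. eauto. }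
      destruct Hex as [y0 Hy0].
      destruct (max_elem (fun y => Rel (f s) y /\ ~ xforces f y B) y0 Hy0) as [y [[Hy1 Hy2] Hy3]].
      assert (Hag := upd_agree L f (LR s n) y Hn).
      apply (use_fresh p f (LR s n) y (XNeg B) [Lin (LR s n, XBox B)]); auto.
      * apply upd_I2; auto. intros s0 n0 Heq. injection Heq as -> ->. auto.
      * apply upd_I3; auto. intros; discriminate.
      * rewrite Hr. intros e [<-|[<-|[]]]; exists 0.
        -- exists (LR s n, XNeg B). simpl. rewrite upd_k. repeat split; [right; auto| |].
           ++ rewrite <- (xforces_agree _ f _ _ Hag Xl). auto.
           ++ apply (lok_mono L); auto. intros t Ht; left; auto.
        -- exists (LR s n, XBox B). simpl. rewrite upd_k. repeat split; [right; auto| |].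
           ++ intros z Hz. apply (xforces_agree _ f _ _ Hag Xl). apply NNPP. intros Hb.
              apply (Hy3 z Hz). split; auto. exact (fr_trans _ _ _ HF _ _ _ Hy1 Hz).
           ++ apply (lok_mono L); auto. intros t Ht; left; auto.
    + destruct Hr as [n [[Hn _] Hr]]. simpl in X, Xl. destruct Xl as [XlB XlD].
      set (Q := fun y => Rel (f s) y /\ xforces f y B /\ forall z, Srel (f s) y z -> ~ xforces f z D).
      assert (Hex : exists y0, Q y0).
      { apply NNPP. intros Hne. apply X. intros y Hy Hb. apply NNPP. intros Hz. apply Hne.
        exists y. split; auto. split; auto. intros z Hsz Hd. apply Hz. eauto. }
      destruct Hex as [y0 Hy0].
      destruct (max_elem Q y0 Hy0) as [y [[Hy1 [Hy2 Hy4]] Hy3]].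
      assert (Hag := upd_agree L f (LR s n) y Hn).
      assert (Hms : upd f (LR s n) y s = f s) by (apply Hag; auto).
      apply (use_fresh p f (LR s n) y B [Lin (LR s n, XBoxL s (XNeg D)); Lin (LR s n, XBox (XNeg B))]); auto.
      * apply upd_I2; auto. intros s0 n0 Heq. injection Heq as -> ->. auto.
      * apply upd_I3; auto. intros; discriminate.
      * assert (Hmono : forall A0, lok L A0 -> lok (add_lab L (LR s n)) A0)
          by (intros A0; apply lok_mono; intros t Ht; left; auto).
        rewrite Hr. intros e [<-|[<-|[<-|[]]]]; exists 0.
        -- exists (LR s n, B). simpl. rewrite upd_k. repeat split; [right; auto| |auto].
           rewrite <- (xforces_agree _ f _ _ Hag XlB). auto.
        -- exists (LR s n, XBoxL s (XNeg D)). simpl. rewrite upd_k, Hms. repeat split; [right; auto| | |auto].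
           ++ intros t Ht Hd. apply (Hy4 t Ht). apply (xforces_agree _ f _ _ Hag XlD). auto.
           ++ left; auto.
        -- exists (LR s n, XBox (XNeg B)). simpl. rewrite upd_k. repeat split; [right; auto| |auto].
           intros z Hz Hb. apply (xforces_agree _ f _ _ Hag XlB) in Hb.
           apply (Hy3 z Hz). split; [exact (fr_trans _ _ _ HF _ _ _ Hy1 Hz)|]. split; auto.
           intros u Hu. apply Hy4. apply (fr_S_trans _ _ _ HF _ _ z); auto.
           apply (fr_RS _ _ _ HF); auto.
    + destruct Hr as [n [[Hn _] Hr]]. simpl in X, Xl. destruct Xl as [Lrho XlB].
      assert (Hex : exists y0, Srel (f rho) (f s) y0 /\ ~ xforces f y0 B).
      { apply NNPP. intros Hne. apply X. intros y Hy. apply NNPP. intros Hb. apply Hne. eauto. }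
      destruct Hex as [y0 Hy0].
      destruct (max_elem (fun y => Srel (f rho) (f s) y /\ ~ xforces f y B) y0 Hy0) as [y [[Hy1 Hy2] Hy3]].
      assert (Hag := upd_agree L f (LS s rho n) y Hn).
      apply (use_fresh p f (LS s rho n) y (XNeg B) [Lin (LS s rho n, XBox B)]); auto.
      * apply upd_I2; auto. intros; discriminate.
      * apply upd_I3; auto. intros s' r' n' Heq. injection Heq as -> -> ->. auto.
      * rewrite Hr. intros e [<-|[<-|[]]]; exists 0.
        -- exists (LS s rho n, XNeg B). simpl. rewrite upd_k. repeat split; [right; auto| |].
           ++ rewrite <- (xforces_agree _ f _ _ Hag XlB). auto.
           ++ apply (lok_mono L); auto. intros t Ht; left; auto.
        -- exists (LS s rho n, XBox B). simpl. rewrite upd_k. repeat split; [right; auto| |].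
           ++ intros z Hz. apply (xforces_agree _ f _ _ Hag XlB). apply NNPP. intros Hb.
              apply (Hy3 z Hz). split; auto.
              apply (fr_S_trans _ _ _ HF _ _ y); auto.
              apply (fr_RS _ _ _ HF); auto. exact (proj2 (fr_S_dom _ _ _ HF _ _ _ Hy1)).
           ++ apply (lok_mono L); auto. intros t Ht; left; auto.
  - apply (use_simple p f); auto. rewrite Hr. simpl in X, Xl. intros e [<-|[]].
    destruct (classic (xforces f (f s) B)) as [Hb|Hb].
    + exists 1, (s, D). simpl. repeat split; tauto.
    + exists 0, (s, XNeg B). simpl. repeat split; tauto.
  - destruct Hr as [ts [[_ Hts] Hr]]. apply (use_simple p f); auto. rewrite Hr.
    intros e He. apply in_map_iff in He. destruct He as [t [<- Ht]]. apply Hts in Ht. destruct Ht as [Lt Rt].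
    exists 0, (t, B). simpl in *. repeat split; auto. apply X. apply (HR _ Rt).
  - destruct Hr as [ts [[_ Hts] Hr]]. apply (use_simple p f); auto. rewrite Hr.
    simpl in X, Xl. destruct Xl as [XlB XlD].
    intros e He. apply in_map_iff in He. destruct He as [t [<- Ht]]. apply Hts in Ht. destruct Ht as [Lt Rt].
    destruct (classic (xforces f (f t) B)) as [Hb|Hb].
    + exists 1, (t, XNeg (XBoxL s (XNeg D))). simpl. repeat split; auto.
      intros Hall. destruct (X (f t) (HR _ Rt) Hb) as [z [Hz Hd]]. exact (Hall z Hz Hd).
    + exists 0, (t, XNeg B). simpl. repeat split; auto.
  - destruct Hr as [ts [[_ Hts] Hr]]. apply (use_simple p f); auto. rewrite Hr.
    simpl in X, Xl. destruct Xl as [Lrho XlB].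
    intros e He. apply in_map_iff in He. destruct He as [t [<- Ht]]. apply Hts in Ht. destruct Ht as [Lt St].
    exists 0, (t, B). simpl. repeat split; auto. apply X. apply (HR _ St).
Qed.

End StepSat.

Lemma step_persist T T' : step C T T' -> forall r m, T r = Some m ->
  exists m', T' r = Some m' /\ nlab m' = nlab m /\ nfor m' = nfor m.
Proof.
  intros [[_ Heq]|[q [nd [E [_ [_ [_ HT]]]]]]] r m Hm.
  - exists m. rewrite Heq. auto.
  - exact (S1 C T T' q nd E HT r m Hm).
Qed.

Lemma step_tc T T' : tree_closed T -> step C T T' -> tree_closed T'.
Proof.
  intros Htc [[_ Heq]|[q [nd [E [_ [_ [_ HT]]]]]]].
  - intros r s. rewrite !Heq. apply Htc.
  - exact (tc_step C T T' q nd E HT Htc).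
Qed.

Lemma step_sat T T' p : tree_closed T -> step C T T' -> sat T p -> exists p', prefix p p' /\ sat T' p'.
Proof.
  intros Htc [[_ Heq]|[q [nd [E [_ [Hq [Hrule HT]]]]]]] Hs.
  - assert (T' = T) as -> by (apply functional_extensionality; auto).
    exists p. split; auto. apply prefix_refl.
  - eapply sat_step2; eauto.
Qed.

Section Final.
Variables (stage : nat -> tab) (A : form) (x : W).
Hypothesis Hsys : systematic C [XNeg (emb A)] stage.
Hypothesis Hnot : ~ forces Rel Srel V x A.

Lemma stage_tc n : tree_closed (stage n).
Proof.
  induction n.
  - intros r s. rewrite !(proj1 Hsys). destruct r as [|c r]; simpl.
    + discriminate.
    + destruct c; simpl; [destruct (r ++ s)|]; simpl; congruence.
  - eapply step_tc; eauto. apply (proj2 Hsys).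
Qed.

Lemma persist_le n m r nd : stage n r = Some nd -> n <= m ->
  exists nd', stage m r = Some nd' /\ nlab nd' = nlab nd /\ nfor nd' = nfor nd.
Proof.
  intros H Hle. induction Hle.
  - exists nd. auto.
  - destruct IHHle as [m1 [Hm1 [Hm2 Hm3]]].
    destruct (step_persist _ _ (proj2 Hsys m) r m1 Hm1) as [m2 [H2 [H3 H4]]].
    exists m2. split; auto. split; congruence.
Qed.

Lemma sat0 : sat (stage 0) [].
Proof.
  assert (H0 : forall r, stage 0 r = init_tab [XNeg (emb A)] r) by apply (proj1 Hsys).
  split.
  - split.
    + rewrite H0. simpl. discriminate.
    + intros i. rewrite H0. destruct i; reflexivity.
  - assert (Hlab : forall t, lab (stage 0) [] t -> t = L0).
    { intros t [r [nd [Hr [Hnd Ht]]]]. apply prefix_nil_inv in Hr. subst r.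
      rewrite H0 in Hnd. simpl in Hnd. injection Hnd as <-. simpl in Ht. auto. }
    exists (fun _ => x). split; [|split].
    + intros r nd Hr Hnd. apply prefix_nil_inv in Hr. subst r.
      rewrite H0 in Hnd. simpl in Hnd. injection Hnd as <-. simpl. split.
      * rewrite xforces_emb. auto.
      * apply lok_emb.
    + intros s n Hs. apply Hlab in Hs. discriminate.
    + intros s r n Hs. apply Hlab in Hs. discriminate.
Qed.

Definition next n (s : {p | sat (stage n) p}) : {p' | prefix (proj1_sig s) p' /\ sat (stage (S n)) p'} :=
  constructive_indefinite_description _
    (step_sat _ _ (proj1_sig s) (stage_tc n) (proj2 Hsys n) (proj2_sig s)).

Fixpoint chain (n : nat) : {p | sat (stage n) p} :=
  match n as n0 return {p | sat (stage n0) p} with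
  | 0 => exist _ [] sat0
  | S n' => let s' := next n' (chain n') in exist _ (proj1_sig s') (proj2 (proj2_sig s'))
  end.

Definition cp n := proj1_sig (chain n).

Lemma cp_sat n : sat (stage n) (cp n).
Proof. unfold cp. exact (proj2_sig (chain n)). Qed.

Lemma cp_step n : prefix (cp n) (cp (S n)).
Proof. unfold cp. simpl. exact (proj1 (proj2_sig (next n (chain n)))). Qed.

Lemma cp_mono n m : n <= m -> prefix (cp n) (cp m).
Proof.
  intros H. induction H; [apply prefix_refl|]. eapply prefix_trans; eauto. apply cp_step.
Qed.

Definition Pbr (r : pos) : Prop := exists n, prefix r (cp n).

Lemma Pbr_union : union_branch stage Pbr.
Proof.
  split; [|split; [|split; [|split]]].
  - exists 0. apply prefix_nil.
  - intros r [n Hn]. exists n. eapply tc_prefix; eauto; [apply stage_tc|].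
    apply (cp_sat n).
  - intros r r' [n Hn] Hr'. exists n. eapply prefix_trans; eauto.
  - intros r1 r2 [n1 H1] [n2 H2]. apply (prefix_cmp _ _ (cp (max n1 n2))).
    + eapply prefix_trans; [exact H1|apply cp_mono; lia].
    + eapply prefix_trans; [exact H2|apply cp_mono; lia].
  - intros r [n Hn] [i [m Hm]].
    set (N := max n m).
    assert (HN : stage N (r ++ [i]) <> None).
    { destruct (stage m (r ++ [i])) eqn:Es; [|congruence].
      destruct (persist_le m N _ _ Es ltac:(unfold N; lia)) as [nd' [-> _]]. discriminate. }
    assert (Hp : prefix r (cp N)) by (eapply prefix_trans; [exact Hn|apply cp_mono; unfold N; lia]).
    destruct Hp as [u Hu]. destruct u as [|j u].
    + exfalso. rewrite app_nil_r in Hu. destruct (cp_sat N) as [[_ Hl] _].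
      apply HN. rewrite <- Hu. apply Hl.
    + exists j. exists N. exists u. rewrite Hu, <- app_assoc. reflexivity.
Qed.

Lemma Pbr_open : ~ branch_closed stage Pbr.
Proof.
  intros [r1 [r2 [n [n1 [n2 [[a Ha] [[b Hb] [H1 [H2 [Hl Hf]]]]]]]]]].
  set (N := max n (max a b)).
  destruct (persist_le n N _ _ H1 ltac:(unfold N; lia)) as [m1 [Hm1 [Hm1l Hm1f]]].
  destruct (persist_le n N _ _ H2 ltac:(unfold N; lia)) as [m2 [Hm2 [Hm2l Hm2f]]].
  destruct (cp_sat N) as [_ [f [I1 _]]].
  destruct (I1 r1 m1) as [X1 _]; auto.
  { eapply prefix_trans; [exact Ha|apply cp_mono; unfold N; lia]. }
  destruct (I1 r2 m2) as [X2 _]; auto.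
  { eapply prefix_trans; [exact Hb|apply cp_mono; unfold N; lia]. }
  rewrite Hm2f, Hf, Hm2l, <- Hl, <- Hm1l, <- Hm1f in X2. simpl in X2. auto.
Qed.

End Final.
End Sem.

Theorem mainTheorem4 (X : form -> Prop) (C : horn -> Prop) (A : form)
  (stage : nat -> tab) :
  horn_witness X C ->
  systematic C [XNeg (emb A)] stage ->
  tableau_closes stage ->
  forall (W : Type) (Rel : W -> W -> Prop) (Srel : W -> W -> W -> Prop)
         (V : nat -> W -> Prop) (x : W),
    ILFrame W Rel Srel ->
    (forall h, C h -> horn_holds_in (fun _ => True) Rel Srel h) ->
    forces Rel Srel V x A.
Proof.
  intros _ Hsys Hcl W Rel Srel V x HF HC. apply NNPP. intros Hnot.
  apply (Pbr_open C W Rel Srel V HF HC stage A x Hsys Hnot).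
  apply Hcl. apply Pbr_union.
Qed.
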